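(* Let $f$ be a homeomorphism of a compact manifold $M$ whose non-wandering set is all of $M$. Let $M_1\to M$ be a finite cover and let $g:M_1\to M_1$ be a lift of an iterate $f^k$ ($k\ge1$) of $f$. Then the non-wandering set of $g$ is all of $M_1$.
   Context: The non-wandering set of a homeomorphism $\phi$ of $X$ is the set of $x$ such that for every neighbourhood $U$ of $x$ there is $n>0$ with $\phi^n(U)\cap U\neq\emptyset$. *)

(* Defs.v *)
From Stdlib Require Import Reals List.
From Stdlib Require Fin.
Open Scope R_scope.

Definition is_topology {X : Type} (op : (X -> Prop) -> Prop) : Prop :=
  op (fun _ => True) /\ op (fun _ => False) /\
  (forall U V, op U -> op V -> op (fun x => U x /\ V x)) /\
  (forall F : (X -> Prop) -> Prop, (forall U, F U -> op U) ->
      op (fun x => exists U, F U /\ U x)).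

Definition continuous {X Y : Type} (opX : (X -> Prop) -> Prop) (opY : (Y -> Prop) -> Prop)
  (f : X -> Y) : Prop :=
  forall W, opY W -> opX (fun x => W (f x)).

(* continuity of f restricted to the subspace A (subspace topology) *)
Definition continuous_on {X Y : Type} (opX : (X -> Prop) -> Prop) (opY : (Y -> Prop) -> Prop)
  (A : X -> Prop) (f : X -> Y) : Prop :=
  forall W, opY W -> exists O, opX O /\ forall x, A x -> (O x <-> W (f x)).

Definition homeomorphism {X Y : Type} (opX : (X -> Prop) -> Prop) (opY : (Y -> Prop) -> Prop)
  (f : X -> Y) : Prop :=
  exists h : Y -> X, (forall x, h (f x) = x) /\ (forall y, f (h y) = y) /\
    continuous opX opY f /\ continuous opY opX h.

Definition compact {X : Type} (op : (X -> Prop) -> Prop) : Prop :=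
  forall F : (X -> Prop) -> Prop, (forall U, F U -> op U) ->
    (forall x, exists U, F U /\ U x) ->
    exists l : list (X -> Prop), (forall U, In U l -> F U) /\
       (forall x, exists U, In U l /\ U x).

Definition hausdorff {X : Type} (op : (X -> Prop) -> Prop) : Prop :=
  forall x y, x <> y -> exists U V, op U /\ op V /\ U x /\ V y /\
    (forall z, U z -> V z -> False).

Definition second_countable {X : Type} (op : (X -> Prop) -> Prop) : Prop :=
  exists B : nat -> X -> Prop, (forall i, op (B i)) /\
    forall U, op U -> forall x, U x -> exists i, B i x /\ (forall z, B i z -> U z).

Definition Rn (n : nat) : Type := Fin.t n -> R.

Definition Rn_open (n : nat) (U : Rn n -> Prop) : Prop :=
  forall x, U x -> exists eps, 0 < eps /\
    forall y : Rn n, (forall i, Rabs (y i - x i) < eps) -> U y.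

Definition locally_euclidean {X : Type} (op : (X -> Prop) -> Prop) (n : nat) : Prop :=
  forall x, exists (U : X -> Prop) (V : Rn n -> Prop) (phi : X -> Rn n) (psi : Rn n -> X),
    op U /\ U x /\ Rn_open n V /\
    (forall z, U z -> V (phi z) /\ psi (phi z) = z) /\
    (forall v, V v -> U (psi v) /\ phi (psi v) = v) /\
    continuous_on op (Rn_open n) U phi /\
    continuous_on (Rn_open n) op V psi.

Definition compact_manifold {X : Type} (op : (X -> Prop) -> Prop) : Prop :=
  hausdorff op /\ second_countable op /\ (exists n, locally_euclidean op n) /\ compact op.

Definition finite_covering {Y X : Type} (opY : (Y -> Prop) -> Prop) (opX : (X -> Prop) -> Prop)
  (p : Y -> X) : Prop :=
  continuous opY opX p /\ (forall x, exists y, p y = x) /\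
  forall x, exists (U : X -> Prop) (sheets : list (Y -> Prop)),
    opX U /\ U x /\
    (forall V, In V sheets -> opY V) /\
    (forall y, U (p y) <-> exists V, In V sheets /\ V y) /\
    (forall i j y, (i < length sheets)%nat -> (j < length sheets)%nat ->
        nth i sheets (fun _ => False) y -> nth j sheets (fun _ => False) y -> i = j) /\
    (forall V, In V sheets -> exists s : X -> Y,
        (forall y, V y -> s (p y) = y) /\
        (forall z, U z -> V (s z) /\ p (s z) = z) /\
        continuous_on opX opY U s).

Definition nonwandering_everywhere {X : Type} (op : (X -> Prop) -> Prop) (phi : X -> X) : Prop :=
  forall x (U : X -> Prop), op U -> U x ->
    exists (n : nat) (y : X), (0 < n)%nat /\ U y /\ U (Nat.iter n phi y).

(* Main.v *)
Require Import Defs.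
From Stdlib Require Import Reals List.
From Stdlib Require Import Classical IndefiniteDescription Lia.
Module PH.
From mathcomp Require Import all_boot.

Lemma ph1 (d N : nat) (F : nat -> nat) :
  (forall j, le j N -> lt (F j) d) -> le d N ->
  exists i j, lt i j /\ le j N /\ F i = F j.
Proof.
move=> HF HdN.
have HF' : forall j : 'I_N.+1, (F j < d)%N.
  by move=> j; apply/ltP; apply: HF; apply/leP; rewrite -ltnS.
pose G (j : 'I_N.+1) : 'I_d := Ordinal (HF' j).
apply: NNPP => Hno.
have inj : injective G.
  move=> i j /(congr1 val) /= Hij; apply: val_inj => /=.
  case: (ltngtP i j) => // Hlt; exfalso; apply: Hno.
  - exists i, j; split; first by apply/ltP.
    by split=> //; apply/leP; rewrite -ltnS.
  - exists j, i; split; first by apply/ltP.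
    by split=> //; apply/leP; rewrite -ltnS.
have := leq_card _ inj; rewrite !card_ord => H.
by move/leP: HdN; rewrite leqNgt H.
Qed.

Lemma ph2 (d : nat) (F : nat -> nat -> nat) :
  (forall j c, le j (d ^ d) -> lt c d -> lt (F j c) d) ->
  exists i j, lt i j /\ le j (d ^ d) /\ forall c, lt c d -> F i c = F j c.
Proof.
move=> HF.
have HF' : forall (j : 'I_(d ^ d).+1) (c : 'I_d), (F j c < d)%N.
  by move=> j c; apply/ltP; apply: HF; [apply/leP; rewrite -ltnS | apply/ltP].
pose G (j : 'I_(d ^ d).+1) : {ffun 'I_d -> 'I_d} := [ffun c => Ordinal (HF' j c)].
apply: NNPP => Hno.
have eqF : forall i j : 'I_(d ^ d).+1, G i = G j -> forall c, lt c d -> F i c = F j c.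
  move=> i j Hij c /ltP Hc.
  have := congr1 (fun g : {ffun 'I_d -> 'I_d} => val (g (Ordinal Hc))) Hij.
  by rewrite /G !ffunE.
have inj : injective G.
  move=> i j Hij; apply: val_inj => /=.
  case: (ltngtP i j) => // Hlt; exfalso; apply: Hno.
  - exists i, j; split; first by apply/ltP.
    split; first by apply/leP; rewrite -ltnS.
    exact: eqF.
  - exists j, i; split; first by apply/ltP.
    split; first by apply/leP; rewrite -ltnS.
    by move=> c Hc; symmetry; apply: eqF.
have := leq_card _ inj; rewrite card_ffun !card_ord.
by rewrite ltnn.
Qed.

Lemma ph3 (d : nat) (t : nat -> nat) :
  (forall c, lt c d -> lt (t c) d) ->
  (forall c c', lt c d -> lt c' d -> t c = t c' -> c = c') ->
  forall m, lt m d -> exists c, lt c d /\ t c = m.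
Proof.
move=> Ht Hinj m /ltP Hm.
have Ht' : forall c : 'I_d, (t c < d)%N by move=> c; apply/ltP; apply: Ht; apply/ltP.
pose G (c : 'I_d) : 'I_d := Ordinal (Ht' c).
have inj : injective G.
  move=> i j /(congr1 val) /= Hij; apply: val_inj; apply: Hinj => //; apply/ltP; exact: ltn_ord.
have := inj_card_onto inj (leqnn _) (Ordinal Hm).
case/codomP=> c /(congr1 val) /= Hc.
by exists c; split; [apply/ltP | rewrite Hc].
Qed.
Lemma ph2w (d : nat) : exists N, forall F : nat -> nat -> nat,
  (forall j c, le j N -> lt c d -> lt (F j c) d) ->
  exists i j, lt i j /\ le j N /\ forall c, lt c d -> F i c = F j c.
Proof. exists (d ^ d)%N; exact: ph2. Qed.
End PH.
Open Scope nat_scope.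

Lemma iter_cont {X} (op : (X -> Prop) -> Prop) (phi : X -> X) :
  continuous op op phi -> forall n, continuous op op (Nat.iter n phi).
Proof.
  intros Hc n; induction n as [|n IH]; intros W HW; simpl.
  - exact HW.
  - apply (IH (fun y => W (phi y))). apply Hc; exact HW.
Qed.

Lemma lemR {X} (op : (X -> Prop) -> Prop) (phi : X -> X) :
  is_topology op -> (forall n, continuous op op (Nat.iter n phi)) ->
  nonwandering_everywhere op phi ->
  forall N U x, op U -> U x -> exists z (S : nat -> nat), S 0 = 0 /\
    (forall i j, (i < j)%nat -> (S i < S j)%nat) /\
    forall j, (j <= N)%nat -> U (Nat.iter (S j) phi z).
Proof.
  intros Htop Hc Hnw N; induction N as [|N IH]; intros U x HU Ux.
  - exists x, (fun j => j); split; [reflexivity|split; [intros; assumption|]].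
    intros j Hj; replace j with 0%nat by lia; exact Ux.
  - destruct (Hnw x U HU Ux) as [n [y [Hn [Uy Uny]]]].
    destruct Htop as [_ [_ [Hint _]]].
    assert (HU' : op (fun w => U w /\ U (Nat.iter n phi w))).
    { apply Hint; [exact HU| apply Hc; exact HU]. }
    destruct (IH _ y HU' (conj Uy Uny)) as [z [S' [HS0 [Hinc HU2]]]].
    exists z, (fun j => match j with 0 => 0 | Datatypes.S j' => n + S' j' end)%nat.
    split; [reflexivity|split].
    + intros i j Hij; destruct i as [|i]; destruct j as [|j]; try lia.
      specialize (Hinc i j); lia.
    + intros j Hj; destruct j as [|j].
      * simpl. destruct (HU2 0%nat ltac:(lia)) as [H _]. rewrite HS0 in H. exact H.
      * rewrite Nat.iter_add. apply (HU2 j ltac:(lia)).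
Qed.

Lemma iter_iter {X} (f : X -> X) k q y :
  Nat.iter q (Nat.iter k f) y = Nat.iter (q * k) f y.
Proof.
  induction q as [|q IH]; [reflexivity|].
  simpl Nat.iter at 1. rewrite IH, <- Nat.iter_add. reflexivity.
Qed.

Lemma lemA {X} (op : (X -> Prop) -> Prop) (f : X -> X) k :
  is_topology op -> continuous op op f -> nonwandering_everywhere op f ->
  (1 <= k)%nat -> nonwandering_everywhere op (Nat.iter k f).
Proof.
  intros Htop Hc Hnw Hk x U HU Ux.
  destruct (lemR op f Htop (iter_cont op f Hc) Hnw k U x HU Ux)
    as [z [S [HS0 [Hinc HUS]]]].
  destruct (PH.ph1 k k (fun j => S j mod k)) as [i [j [Hij [Hjk Heq]]]].
  { intros j _. apply Nat.mod_upper_bound; lia. }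
  { lia. }
  simpl in Heq.
  pose proof (Nat.div_mod (S i) k ltac:(lia)) as Di.
  pose proof (Nat.div_mod (S j) k ltac:(lia)) as Dj.
  pose proof (Hinc i j Hij) as Hlt.
  set (qi := S i / k) in *. set (qj := S j / k) in *.
  assert (Hq : (qi < qj)%nat) by nia.
  exists (qj - qi)%nat, (Nat.iter (S i) f z). split; [lia|split].
  - apply HUS; lia.
  - rewrite iter_iter, <- Nat.iter_add.
    replace ((qj - qi) * k + S i)%nat with (S j) by nia.
    apply HUS; lia.
Qed.

Lemma iter_inj {X} (g : X -> X) (h : X -> X) :
  (forall x, h (g x) = x) -> forall n a b, Nat.iter n g a = Nat.iter n g b -> a = b.
Proof.
  intros Hh n; induction n as [|n IH]; intros a b E; [exact E|].
  apply IH. simpl in E. rewrite <- (Hh (Nat.iter n g a)), E, Hh. reflexivity.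
Qed.

Lemma iter_lift {Y X} (p : Y -> X) (g : Y -> Y) (h : X -> X) :
  (forall y, p (g y) = h (p y)) -> forall n y, p (Nat.iter n g y) = Nat.iter n h (p y).
Proof.
  intros H n; induction n as [|n IH]; intro y; [reflexivity|].
  simpl. rewrite H, IH. reflexivity.
Qed.

Close Scope nat_scope.

Theorem mainTheorem11
  (M : Type) (opM : (M -> Prop) -> Prop)
  (M1 : Type) (opM1 : (M1 -> Prop) -> Prop)
  (f : M -> M) (p : M1 -> M) (g : M1 -> M1) (k : nat) :
  is_topology opM -> is_topology opM1 ->
  compact_manifold opM ->
  homeomorphism opM opM f ->
  nonwandering_everywhere opM f ->
  finite_covering opM1 opM p ->
  (1 <= k)%nat ->
  homeomorphism opM1 opM1 g ->
  (forall y, p (g y) = Nat.iter k f (p y)) ->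
  nonwandering_everywhere opM1 g.
Proof.
  intros TM TM1 _ [fi [_ [_ [fc _]]]] Hnw [pc [_ ploc]] Hk [gi [Hgi _]] Hlift.
  set (h := Nat.iter k f) in *.
  assert (Hhnw : nonwandering_everywhere opM h) by (apply lemA; assumption).
  assert (Hhc : forall n, continuous opM opM (Nat.iter n h)).
  { apply iter_cont. apply iter_cont. exact fc. }
  intros x W HW Wx.
  destruct (ploc (p x)) as [U [L [opU [Ux [opL [cover [disj secs]]]]]]].
  destruct (proj1 (cover x) Ux) as [V [VL Vx]].
  destruct (In_nth L V (fun _ => False) VL) as [c0 [Hc0 Ec0]].
  destruct (secs V VL) as [s [sV [sU scont]]].
  pose proof (proj1 (proj2 (proj2 TM1))) as Hint1.
  pose proof (proj1 (proj2 (proj2 TM))) as Hint.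
  destruct (scont (fun y => W y /\ V y) (Hint1 _ _ HW (opL V VL))) as [O [opO HO]].
  set (Q := fun z => U z /\ O z).
  assert (opQ : opM Q) by (apply Hint; assumption).
  assert (Qpx : Q (p x)).
  { split; [exact Ux|]. apply (proj2 (HO (p x) Ux)). rewrite sV by exact Vx. auto. }
  assert (inW : forall y, V y -> Q (p y) -> W y).
  { intros y Vy [Uy Oy]. destruct (proj1 (HO _ Uy) Oy) as [Wy _].
    rewrite sV in Wy by exact Vy. exact Wy. }
  set (d := length L).
  set (F0 := fun _ : M1 => False).
  assert (Hsec : forall c, exists sc : M -> M1, (c < d)%nat ->
     (forall y, nth c L F0 y -> sc (p y) = y) /\
     (forall z, U z -> nth c L F0 (sc z) /\ p (sc z) = z)).
  { intro c. destruct (Nat.lt_ge_cases c d) as [Hc|Hc].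
    - destruct (secs (nth c L F0) (nth_In L F0 Hc)) as [sc [H1 [H2 _]]].
      exists sc; intros _; split; [exact H1|intros z Uz; exact (H2 z Uz)].
    - exists (fun _ => x); intro; lia. }
  set (sec := fun c => proj1_sig (constructive_indefinite_description _ (Hsec c))).
  assert (Hsecp : forall c, (c < d)%nat ->
     (forall y, nth c L F0 y -> sec c (p y) = y) /\
     (forall z, U z -> nth c L F0 (sec c z) /\ p (sec c z) = z)).
  { intro c. exact (proj2_sig (constructive_indefinite_description _ (Hsec c))). }
  assert (Hidx : forall y, exists c, U (p y) -> (c < d)%nat /\ nth c L F0 y).
  { intro y. destruct (classic (U (p y))) as [Uy|Uy].
    - destruct (proj1 (cover y) Uy) as [V' [V'L V'y]].
      destruct (In_nth L V' F0 V'L) as [c [Hc Ec]].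
      exists c; intros _; split; [exact Hc|]. rewrite Ec; exact V'y.
    - exists 0%nat; intro; contradiction. }
  set (idx := fun y => proj1_sig (constructive_indefinite_description _ (Hidx y))).
  assert (Hidxp : forall y, U (p y) -> (idx y < d)%nat /\ nth (idx y) L F0 y).
  { intro y. exact (proj2_sig (constructive_indefinite_description _ (Hidx y))). }
  destruct (PH.ph2w d) as [N HN].
  destruct (lemR opM h TM Hhc Hhnw N Q (p x) opQ Qpx)
    as [z [S [HS0 [Hinc HQS]]]].
  assert (Uz : U z).
  { destruct (HQS 0%nat ltac:(lia)) as [H _]. rewrite HS0 in H. exact H. }
  assert (Hpz : forall j c, (c < d)%nat -> p (Nat.iter (S j) g (sec c z)) = Nat.iter (S j) h z).
  { intros j c Hc. rewrite (iter_lift p g h Hlift).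
    rewrite (proj2 (proj2 (Hsecp c Hc) z Uz)). reflexivity. }
  assert (HUj : forall j c, (j <= N)%nat -> (c < d)%nat -> U (p (Nat.iter (S j) g (sec c z)))).
  { intros j c Hj Hc. rewrite (Hpz j c Hc). exact (proj1 (HQS j Hj)). }
  destruct (HN (fun j c => idx (Nat.iter (S j) g (sec c z)))) as [i [j [Hij [HjN Heq]]]].
  { intros j c Hj Hc. exact (proj1 (Hidxp _ (HUj j c Hj Hc))). }
  cbv beta in Heq.
  destruct (PH.ph3 d (fun c => idx (Nat.iter (S i) g (sec c z)))) with (m := c0)
    as [c [Hc Hcm]].
  - intros c Hc. exact (proj1 (Hidxp _ (HUj i c ltac:(lia) Hc))).
  - intros c c' Hc Hc' E. cbv beta in E.
    destruct (Hidxp _ (HUj i c ltac:(lia) Hc)) as [Hm Hnm1].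
    destruct (Hidxp _ (HUj i c' ltac:(lia) Hc')) as [_ Hnm2]. rewrite <- E in Hnm2.
    assert (E2 : Nat.iter (S i) g (sec c z) = Nat.iter (S i) g (sec c' z)).
    { rewrite <- (proj1 (Hsecp _ Hm) _ Hnm1), <- (proj1 (Hsecp _ Hm) _ Hnm2).
      rewrite (Hpz i c Hc), (Hpz i c' Hc'). reflexivity. }
    apply (iter_inj g gi Hgi) in E2.
    apply (disj c c' (sec c z) Hc Hc').
    + exact (proj1 (proj2 (Hsecp c Hc) z Uz)).
    + rewrite E2. exact (proj1 (proj2 (Hsecp c' Hc') z Uz)).
  - exact Hc0.
  - cbv beta in Hcm. pose proof (Hinc i j Hij) as Hlt.
    exists (S j - S i)%nat, (Nat.iter (S i) g (sec c z)). split; [lia|split].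
    + apply inW.
      * destruct (Hidxp _ (HUj i c ltac:(lia) Hc)) as [_ Hn]. rewrite Hcm in Hn; unfold F0 in Hn; rewrite Ec0 in Hn. exact Hn.
      * rewrite (Hpz i c Hc). apply HQS. lia.
    + rewrite <- Nat.iter_add. replace (S j - S i + S i)%nat with (S j) by lia.
      apply inW.
      * destruct (Hidxp _ (HUj j c HjN Hc)) as [_ Hn]. rewrite <- (Heq c Hc), Hcm in Hn; unfold F0 in Hn; rewrite Ec0 in Hn. exact Hn.
      * rewrite (Hpz j c Hc). apply HQS. exact HjN.
Qed.
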